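(* Let $\mathbb{K}=(G,M,I)$ be a finite reduced formal context, $\mathcal{A}$ the set of its proper premises, and $BC(\mathcal{A}):=\{A\in\mathcal{A}\mid |A|=1\}$. Then for every $A\in BC(\mathcal{A})$, the set $A^{\bullet}$ computed in $\mathbb{K}$ equals $A^{\bullet}$ computed in $BC(\mathbb{K})$, and both equal $A''\setminus A$. Furthermore, $BC(\mathcal{A})$ is exactly the set of all proper premises of $BC(\mathbb{K})$.
   Context: For a formal context $(G,M,I)$, derivation: $A'=\{m\in M\mid\forall g\in A:(g,m)\in I\}$ for $A\subseteq G$, and $B'=\{g\in G\mid\forall m\in B:(g,m)\in I\}$ for $B\subseteq M$. An object $g$ is irreducible if there is no $X\subseteq G$ with $g\notin X$ and $X'=\{g\}'$; an attribute $m$ is irreducible if there is no $X\subseteq M$ with $m\notin X$ and $X'=\{m\}'$; a context is reduced if all objects and attributes are irreducible. For $A\subseteq M$ define $A^{\bullet}:=A''\setminus\big(A\cup\bigcup_{n\in A}(A\setminus\{n\})''\big)$; $A$ is a proper premise if $A^{\bullet}\neq\emptyset$. For $m,n\in M$, $m\ge_{\mathbb{K}}n$ iff $\{m\}'\supseteq\{n\}'$. Let $\mathcal{M}(M)$ be the set of attributes whose attribute concept $(\{m\}',\{m\}'')$ is meet-irreducible in the concept lattice, and $\overline{\mathcal{M}(M)}=\{\overline m\mid m\in\mathcal{M}(M)\}$ new elements. The Birkhoff completion is $BC(\mathbb{K}):=\big(G\cup\overline{\mathcal{M}(M)},M,I\cup\{(\overline m,n)\in\overline{\mathcal{M}(M)}\times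 M\mid m\not\ge_{\mathbb{K}}n\}\big)$; ''computed in $BC(\mathbb{K})$'' means using the derivation operators of $BC(\mathbb{K})$ in the definition of $A^{\bullet}$ and of proper premise. *)

(* Defs.v *)
From mathcomp Require Import all_boot.
Set Implicit Arguments. Unset Strict Implicit. Unset Printing Implicit Defensive.

Section FCA.
Variables (G M : finType) (I : G -> M -> bool).

Definition ext (B : {set M}) : {set G} := [set g | [forall m in B, I g m]].
Definition intt (A : {set G}) : {set M} := [set m | [forall g in A, I g m]].

Definition obj_irreducible (g : G) : Prop :=
  ~ exists X : {set G}, g \notin X /\ intt X = intt [set g].
Definition attr_irreducible (m : M) : Prop :=
  ~ exists X : {set M}, m \notin X /\ ext X = ext [set m].
Definition reduced : Prop :=
  (forall g, obj_irreducible g) /\ (forall m, attr_irreducible m).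

Definition bullet (A : {set M}) : {set M} :=
  intt (ext A) :\: (A :|: \bigcup_(n in A) intt (ext (A :\ n))).
Definition proper_premise (A : {set M}) : Prop := bullet A != set0.

Definition attr_ge (m n : M) : bool := ext [set n] \subset ext [set m].

Definition is_extent (A : {set G}) : bool := ext (intt A) == A.

(* The attribute concept ({m}', {m}'') is meet-irreducible in the concept
   lattice: it is not the top concept (extent G) and it is not the meet of two
   concepts both different from it (meet of concepts = intersection of extents). *)
Definition meet_irr_attr (m : M) : bool :=
  (ext [set m] != setT) &&
  [forall A1 : {set G}, forall A2 : {set G},
     [&& is_extent A1, is_extent A2 & A1 :&: A2 == ext [set m]] ==>
     ((A1 == ext [set m]) || (A2 == ext [set m]))].

(* Birkhoff completion: new objects  overline m  for m in M(M) *)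
Definition BCobj : finType := (G + {m : M | meet_irr_attr m})%type.
Definition BCinc (x : BCobj) (n : M) : bool :=
  match x with
  | inl g => I g n
  | inr mb => ~~ attr_ge (val mb) n
  end.

End FCA.

(* Main.v *)
Require Import Defs.
From mathcomp Require Import all_boot.

Section Gen.
Variables (G M : finType) (I : G -> M -> bool).

Lemma extP (B : {set M}) g : reflect (forall m, m \in B -> I g m) (g \in ext I B).
Proof. rewrite inE; exact: forall_inP. Qed.

Lemma inttP (A : {set G}) m : reflect (forall g, g \in A -> I g m) (m \in intt I A).
Proof. rewrite inE; exact: forall_inP. Qed.
End Gen.

Section Aux.
Variables (G M : finType) (I : G -> M -> bool).

Lemma ext_set1 g a : (g \in ext I [set a]) = I g a.
Proof.
apply/extP/idP => [H|H m /set1P->//]; exact: H _ (set11 a).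
Qed.

Lemma ext_setU (B C : {set M}) : ext I (B :|: C) = ext I B :&: ext I C.
Proof.
apply/setP => g; rewrite in_setI; apply/extP/andP => [H|[/extP H1 /extP H2] n].
- by split; apply/extP => n Hn; apply: H; rewrite in_setU Hn ?orbT.
- by rewrite in_setU => /orP [Hn|Hn]; [apply: H1 | apply: H2].
Qed.

Lemma cl1 a : intt I (ext I [set a]) = [set n | attr_ge I n a].
Proof.
apply/setP=> n; rewrite inE /attr_ge; apply/inttP/subsetP => H g.
- by move=> Hg; rewrite ext_set1; apply: H.
- by move=> Hg; have := H g Hg; rewrite ext_set1.
Qed.

Lemma cl0 : reduced I -> intt I (ext I set0) = set0.
Proof.
move=> [_ Hm]; apply/setP => n; rewrite in_set0; apply/negP => /inttP Hn.
have HT : forall g, g \in ext I set0 by move=> g; apply/extP => m; rewrite in_set0.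
apply: (Hm n); exists set0; split; first by rewrite in_set0.
apply/setP=> g; rewrite ext_set1 HT; symmetry; exact: Hn.
Qed.

Lemma mirr : reduced I -> forall m, meet_irr_attr I m.
Proof.
move=> [_ Hm] m; rewrite /meet_irr_attr; apply/andP; split.
- apply/negP => /eqP E; apply: (Hm m); exists set0; split; first by rewrite in_set0.
  by rewrite E; apply/setP => g; rewrite in_setT; apply/extP => n; rewrite in_set0.
- apply/forallP => A1; apply/forallP => A2; apply/implyP => /and3P [/eqP E1 /eqP E2 /eqP E].
  apply/negPn/negP => /norP [N1 N2].
  apply: (Hm m); exists (intt I A1 :|: intt I A2); split; last by rewrite ext_setU E1 E2 E.
  rewrite in_setU negb_or; apply/andP; split; apply/negP => Hin.
  + have sub1 : A1 \subset ext I [set m].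
      by apply/subsetP => g Hg; rewrite ext_set1; move/inttP: Hin; apply.
    have sub2 : ext I [set m] \subset A1 by rewrite -E; apply: subsetIl.
    by rewrite eqEsubset sub1 sub2 in N1.
  + have sub1 : A2 \subset ext I [set m].
      by apply/subsetP => g Hg; rewrite ext_set1; move/inttP: Hin; apply.
    have sub2 : ext I [set m] \subset A2 by rewrite -E; apply: subsetIr.
    by rewrite eqEsubset sub1 sub2 in N2.
Qed.

Lemma clBC (red : reduced I) (A : {set M}) :
  intt (@BCinc G M I) (ext (@BCinc G M I) A) = \bigcup_(a in A) [set n | attr_ge I n a].
Proof.
apply/setP => n; apply/inttP/bigcupP.
- move=> H.
  pose x : BCobj I := inr (exist _ n (mirr red n)).
  have : x \notin ext (@BCinc G M I) A.
    by apply/negP => /H; rewrite /BCinc /= /attr_ge subxx.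
  rewrite inE => /forall_inPn [m mA Hm].
  by exists m => //; rewrite inE; rewrite /= negbK in Hm.
- case=> a aA; rewrite inE => Hna x /extP Hx; have := Hx a aA.
  case: x Hx => [g|[mm Hmm]] Hx /= Ha.
  + have : g \in ext I [set a] by rewrite ext_set1.
    by move/(subsetP Hna); rewrite ext_set1.
  + by apply: contra Ha => H; exact: subset_trans Hna H.
Qed.

Lemma bulletBC1 (red : reduced I) a :
  bullet (@BCinc G M I) [set a] = [set n | attr_ge I n a] :\ a.
Proof.
by rewrite /bullet big_set1 setDv !clBC // big_set0 setU0 big_set1.
Qed.

Lemma bulletK1 (red : reduced I) a :
  bullet I [set a] = [set n | attr_ge I n a] :\ a.
Proof.
by rewrite /bullet big_set1 setDv cl0 // setU0 cl1.
Qed.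

Lemma bulletBC_not1 (red : reduced I) (A : {set M}) : #|A| != 1 -> bullet (@BCinc G M I) A = set0.
Proof.
move=> HA; apply/eqP; rewrite -subset0; apply/subsetP => n.
rewrite in_setD => /andP [/negP Hn]; rewrite clBC // => /bigcupP [a aA Hna].
exfalso; apply: Hn; rewrite in_setU; apply/orP; right; apply/bigcupP.
have : 0 < #|A :\ a|.
  move: HA; rewrite (cardsD1 a A) aA add1n.
  by case: #|A :\ a|.
case/card_gt0P => b; rewrite in_setD1 => /andP [ba bA].
exists b => //; rewrite clBC //; apply/bigcupP; exists a => //.
by rewrite in_setD1 eq_sym ba aA.
Qed.

End Aux.

Theorem mainTheorem7 (G M : finType) (I : G -> M -> bool) :
  reduced I ->
  (forall A : {set M}, proper_premise I A -> #|A| = 1 ->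
     bullet I A = bullet (@BCinc G M I) A /\
     bullet (@BCinc G M I) A = intt I (ext I A) :\: A) /\
  (forall A : {set M},
     proper_premise (@BCinc G M I) A <-> (proper_premise I A /\ #|A| = 1)).
Proof.
move=> red; split.
- move=> A _ /eqP /cards1P [a ->].
  by rewrite (@bulletK1 _ _ _ red) (@bulletBC1 _ _ _ red) cl1.
- move=> A; rewrite /proper_premise; split.
  + case: (eqVneq #|A| 1) => [HA|HA]; last by rewrite bulletBC_not1 // eqxx.
    move: (HA) => /eqP /cards1P [a Ea].
    by rewrite Ea (@bulletK1 _ _ _ red) (@bulletBC1 _ _ _ red) => H; split => //; rewrite -Ea.
  + move=> [H /eqP /cards1P [a Ea]]; move: H.
    by rewrite Ea (@bulletK1 _ _ _ red) (@bulletBC1 _ _ _ red).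
Qed.
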